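(* The function $\tilde G$ attains a global maximum on $K$. Moreover, every global maximizer $\alpha^*=(\alpha_1^*,\dots,\alpha_N^* )$ of $\tilde G$ on $K$ satisfies exactly one of the following: (I) $\alpha^*\in\operatorname{Int}(K)$, i.e. $\alpha_j^*>0$ for all $j$ and $\sum_{j=1}^N\alpha_j^*<1$; or (II) there is $n\in\{1,\dots,N-1\}$ with $\alpha_1^*=\dots=\alpha_n^*=0$ and $(\alpha_{n+1}^*,\dots,\alpha_N^* )\in\operatorname{Int}(K_n)$, where $K_n=\{(\alpha_{n+1},\dots,\alpha_N)\in\mathbb{R}^{N-n}:\alpha_j\ge0\ \forall j,\ \sum_{j=n+1}^N\alpha_j\le1\}$. Consequently $\alpha^*$ solves either the system $\partial\tilde G/\partial\alpha_j(\alpha)=0$ for all $j\in\{1,\dots,N\}$ (case I), or the system $\alpha_1=\dots=\alpha_n=0$, $\alpha_{n+1},\dots,\alpha_N\ne0$, $\partial\tilde G/\partial\alpha_j(\alpha)=0$ for $j\in\{n+1,\dots,N\}$ (case II).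
   Context: Durable-good harvesting model. Let $N\ge1$ be an integer, $y_0>0$, $r,\rho\in\mathbb{R}$, and $0\le t_1<t_2<\dots<t_N$ (arrival times in the successive rounds). Let $K=\{\alpha=(\alpha_1,\dots,\alpha_N)\in\mathbb{R}^N:\alpha_j\ge0\ \forall j,\ \sum_{j=1}^N\alpha_j\le1\}$ and $$\tilde G(\alpha)=\sum_{n=1}^N y_0\,\alpha_n\Big(1-\sum_{i=1}^n\alpha_i\Big)e^{t_n(r-\rho)}\prod_{i=1}^{n-1}(1-\alpha_i).$$ *)

(* Defs.v *)
From Stdlib Require Import Reals Lra Lia Arith.
Open Scope R_scope.

(* Vectors alpha in R^N are represented by functions nat -> R, using the
   coordinates 1..N (other coordinates are irrelevant). *)

Fixpoint psum (a : nat -> R) (n : nat) : R :=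
  match n with
  | O => 0
  | S m => psum a m + a (S m)
  end.

Fixpoint pprod (a : nat -> R) (n : nat) : R :=
  match n with
  | O => 1
  | S m => pprod a m * a (S m)
  end.

Definition rsum (a : nat -> R) (m k : nat) : R := psum (fun i => a (m + i)%nat) k.

Definition Gt (N : nat) (y0 r rho : R) (t : nat -> R) (a : nat -> R) : R :=
  psum (fun n => y0 * a n * (1 - psum a n) * exp (t n * (r - rho))
                 * pprod (fun i => 1 - a i) (n - 1)) N.

Definition inK (N : nat) (a : nat -> R) : Prop :=
  (forall j, (1 <= j <= N)%nat -> 0 <= a j) /\ psum a N <= 1.

Definition inIntK (N : nat) (a : nat -> R) : Prop :=
  (forall j, (1 <= j <= N)%nat -> 0 < a j) /\ psum a N < 1.

Definition inIntKn (N n : nat) (a : nat -> R) : Prop :=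
  (forall j, (n < j <= N)%nat -> 0 < a j) /\ rsum a n (N - n) < 1.

Definition upd (a : nat -> R) (j : nat) (x : R) : nat -> R :=
  fun i => if Nat.eq_dec i j then x else a i.

Definition partial_is (F : (nat -> R) -> R) (a : nat -> R) (j : nat) (l : R) : Prop :=
  derivable_pt_lim (fun x => F (upd a j x)) (a j) l.

Definition is_global_max (N : nat) (F : (nat -> R) -> R) (a : nat -> R) : Prop :=
  inK N a /\ forall b, inK N b -> F b <= F a.

Definition caseII (N n : nat) (a : nat -> R) : Prop :=
  (1 <= n <= N - 1)%nat /\ (forall j, (1 <= j <= n)%nat -> a j = 0) /\ inIntKn N n a.

(* Main.v *)
Require Import Defs.
From Stdlib Require Import Reals Lra Lia Arith FunctionalExtensionality.
From Coquelicot Require Import Coquelicot.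
Open Scope R_scope.


Lemma psum_ext a b n : (forall i, (1 <= i <= n)%nat -> a i = b i) -> psum a n = psum b n.
Proof. induction n; simpl; intros H; auto. rewrite IHn by (intros; apply H; lia). rewrite (H (S n)) by lia. auto. Qed.

Lemma pprod_ext a b n : (forall i, (1 <= i <= n)%nat -> a i = b i) -> pprod a n = pprod b n.
Proof. induction n; simpl; intros H; auto. rewrite IHn by (intros; apply H; lia). rewrite (H (S n)) by lia. auto. Qed.

Lemma psum_le a b n : (forall i, (1 <= i <= n)%nat -> a i <= b i) -> psum a n <= psum b n.
Proof. induction n; simpl; intros H. lra. assert (H1 := H (S n) ltac:(lia)). assert (psum a n <= psum b n) by (apply IHn; intros; apply H; lia). lra. Qed.

Lemma psum_plus a b n : psum (fun i => a i + b i) n = psum a n + psum b n.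
Proof. induction n; simpl; lra. Qed.

Lemma psum_nonneg a n : (forall i, (1 <= i <= n)%nat -> 0 <= a i) -> 0 <= psum a n.
Proof. intros H. replace 0 with (psum (fun _ => 0) n). apply psum_le; auto. induction n; simpl; auto. rewrite IHn. lra. intros; apply H; lia. Qed.

Lemma psum_point f n k : (1 <= k <= n)%nat -> (forall m, (1 <= m <= n)%nat -> m <> k -> f m = 0) -> psum f n = f k.
Proof.
  induction n; intros Hk H. lia.
  simpl. destruct (Nat.eq_dec k (S n)).
  - subst. rewrite (psum_ext f (fun _ => 0)). 2:{ intros; apply H; lia. }
    clear. induction n; simpl; lra.
  - rewrite IHn by (try lia; intros; apply H; lia). rewrite (H (S n)) by lia. lra.
Qed.

Lemma psum_single k u n : (1 <= k <= n)%nat -> psum (fun m => if Nat.eq_dec m k then u else 0) n = u.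
Proof. intros Hk. rewrite (psum_point _ n k Hk). destruct (Nat.eq_dec k k); tauto.
  intros m _ Hm. destruct (Nat.eq_dec m k); tauto. Qed.

Lemma psum_ge_two f n i j : (1 <= i)%nat -> (i < j)%nat -> (j <= n)%nat ->
  (forall m, (1 <= m <= n)%nat -> m <> i -> m <> j -> 0 <= f m) -> f i + f j <= psum f n.
Proof.
  intros H1 H2 H3 H.
  rewrite <- (psum_single i (f i) n) by lia. rewrite <- (psum_single j (f j) n) by lia.
  rewrite <- psum_plus. apply psum_le. intros m Hm.
  destruct (Nat.eq_dec m i); destruct (Nat.eq_dec m j); subst; try lia; try lra.
  assert (0 <= f m) by (apply H; auto). lra.
Qed.

Lemma elem_le_psum a n i : (forall j, (1 <= j <= n)%nat -> 0 <= a j) -> (1 <= i <= n)%nat -> a i <= psum a n.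
Proof.
  intros H Hi. rewrite <- (psum_single i (a i) n) by lia. apply psum_le.
  intros m Hm. destruct (Nat.eq_dec m i); subst; try lra. apply H; auto.
Qed.

Lemma psum_mono a n m : (forall j, (1 <= j <= m)%nat -> 0 <= a j) -> (n <= m)%nat -> psum a n <= psum a m.
Proof. intros H Hnm. induction Hnm. lra. simpl. assert (0 <= a (S m)) by (apply H; lia). assert (psum a n <= psum a m) by (apply IHHnm; intros; apply H; lia). lra. Qed.

Lemma pprod_pos a n : (forall i, (1 <= i <= n)%nat -> a i < 1) -> 0 < pprod (fun i => 1 - a i) n.
Proof. induction n; simpl; intros H. lra. apply Rmult_lt_0_compat. apply IHn; intros; apply H; lia. assert (a (S n) < 1) by (apply H; lia). lra. Qed.

Lemma pprod_nonneg a n : (forall i, (1 <= i <= n)%nat -> a i <= 1) -> 0 <= pprod (fun i => 1 - a i) n.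
Proof. induction n; simpl; intros H. lra. apply Rmult_le_pos. apply IHn; intros; apply H; lia. assert (a (S n) <= 1) by (apply H; lia). lra. Qed.

Lemma upd_same a k : upd a k (a k) = a.
Proof. apply functional_extensionality; intro i; unfold upd; destruct (Nat.eq_dec i k); subst; auto. Qed.

Lemma upd_eq a k x : upd a k x k = x.
Proof. unfold upd; destruct (Nat.eq_dec k k); tauto. Qed.

Lemma upd_neq a k x i : i <> k -> upd a k x i = a i.
Proof. unfold upd; destruct (Nat.eq_dec i k); tauto. Qed.

Lemma psum_upd a k x m : (1 <= k)%nat ->
  psum (upd a k x) m = psum (upd a k 0) m + (if Nat.leb k m then x else 0).
Proof.
  intros Hk; induction m; simpl.
  - destruct k; [lia|simpl]; lra.
  - rewrite IHm. destruct (Nat.eq_dec (S m) k).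
    + subst. rewrite !upd_eq. rewrite (proj2 (Nat.leb_gt (S m) m)) by lia. rewrite Nat.leb_refl. lra.
    + rewrite !upd_neq by auto. destruct (Nat.leb_spec k m); destruct (Nat.leb_spec k (S m)); try lia; lra.
Qed.

Lemma pprod_upd a k x m : (1 <= k)%nat ->
  pprod (fun i => 1 - upd a k x i) m = pprod (fun i => 1 - upd a k 0 i) m * (if Nat.leb k m then 1 - x else 1).
Proof.
  intros Hk; induction m; simpl.
  - destruct k; [lia|simpl]; lra.
  - rewrite IHm. destruct (Nat.eq_dec (S m) k).
    + subst. rewrite !upd_eq. rewrite (proj2 (Nat.leb_gt (S m) m)) by lia. rewrite Nat.leb_refl. lra.
    + rewrite !upd_neq by auto. destruct (Nat.leb_spec k m); destruct (Nat.leb_spec k (S m)); try lia; lra.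
Qed.

Lemma psum_upd_a a k m : (1 <= k <= m)%nat -> psum (upd a k 0) m = psum a m - a k.
Proof. intros. assert (H0 := psum_upd a k (a k) m ltac:(lia)). rewrite upd_same in H0.
  rewrite (proj2 (Nat.leb_le k m)) in H0 by lia. lra. Qed.

Lemma pprod_upd_a a k m : (1 <= k <= m)%nat ->
  pprod (fun i => 1 - upd a k 0 i) m * (1 - a k) = pprod (fun i => 1 - a i) m.
Proof. intros. assert (H0 := pprod_upd a k (a k) m ltac:(lia)). rewrite upd_same in H0.
  rewrite (proj2 (Nat.leb_le k m)) in H0 by lia. auto. Qed.

Lemma psum_split a n k : psum a (n + k) = psum a n + rsum a n k.
Proof. unfold rsum. induction k; simpl. rewrite Nat.add_0_r; lra.
  rewrite Nat.add_succ_r. simpl. rewrite IHk. lra. Qed.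


Definition Dm (y0 r rho : R) (t a : nat -> R) (k : nat) (x : R) (m : nat) : R :=
  if Nat.ltb m k then 0 else if Nat.eqb m k then
    y0 * exp (t m * (r - rho)) * pprod (fun i => 1 - a i) (k-1) * (1 - psum a (k-1) - 2*x)
  else y0 * a m * exp (t m * (r - rho)) * pprod (fun i => 1 - upd a k 0 i) (m-1) * (2*x - 2 + psum (upd a k 0) m).

Lemma psum_deriv (f : R -> nat -> R) d x0 n :
  (forall m, derivable_pt_lim (fun x => f x m) x0 (d m)) ->
  derivable_pt_lim (fun x => psum (f x) n) x0 (psum d n).
Proof.
  intros H. induction n; simpl.
  - apply (derivable_pt_lim_const 0 x0).
  - apply (derivable_pt_lim_plus (fun x => psum (f x) n) (fun x => f x (S n))); auto.
Qed.

Lemma deriv_G N y0 r rho t a k x0 : (1 <= k)%nat ->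
  derivable_pt_lim (fun x => Gt N y0 r rho t (upd a k x)) x0 (psum (Dm y0 r rho t a k x0) N).
Proof.
  intros Hk. unfold Gt.
  apply (psum_deriv (fun x n => y0 * upd a k x n * (1 - psum (upd a k x) n) * exp (t n * (r - rho)) *
      pprod (fun i => 1 - upd a k x i) (n - 1))).
  intro m. unfold Dm. destruct (Nat.ltb_spec m k).
  - set (c := y0 * a m * (1 - psum a m) * exp (t m * (r - rho)) * pprod (fun i => 1 - a i) (m - 1)).
    replace (fun x => _) with (fun _ : R => c).
    + apply (derivable_pt_lim_const c x0).
    + apply functional_extensionality; intro x. unfold c.
      rewrite upd_neq by lia.
      rewrite (psum_ext (upd a k x) a) by (intros; apply upd_neq; lia).
      rewrite (pprod_ext (fun i => 1 - upd a k x i) (fun i => 1 - a i)) by (intros; rewrite upd_neq; [auto|lia]).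
      auto.
  - destruct (Nat.eqb_spec m k).
    + subst m. destruct k as [|k]; [lia|]. replace (S k - 1)%nat with k by lia.
      replace (fun x => _) with (fun x => y0 * x * (1 - (psum a k + x)) * exp (t (S k) * (r - rho)) * pprod (fun i => 1 - a i) k).
      * apply is_derive_Reals. auto_derive; auto. ring.
      * apply functional_extensionality; intro x. simpl. rewrite upd_eq.
        rewrite (psum_ext (upd a (S k) x) a) by (intros; apply upd_neq; lia).
        rewrite (pprod_ext (fun i => 1 - upd a (S k) x i) (fun i => 1 - a i)) by (intros; rewrite upd_neq; [auto|lia]).
        auto.
    + set (S0 := psum (upd a k 0) m). set (P0 := pprod (fun i => 1 - upd a k 0 i) (m - 1)).
      replace (fun x => _) with (fun x => y0 * a m * (1 - (S0 + x)) * exp (t m * (r - rho)) * (P0 * (1 - x))).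
      * apply is_derive_Reals. auto_derive; auto. ring.
      * apply functional_extensionality; intro x. rewrite upd_neq by lia.
        unfold S0, P0. rewrite (psum_upd a k x m) by lia. rewrite (pprod_upd a k x (m-1)) by lia.
        rewrite (proj2 (Nat.leb_le k m)) by lia. rewrite (proj2 (Nat.leb_le k (m-1))) by lia. auto.
Qed.


Lemma dpos f x0 l : derivable_pt_lim f x0 l -> 0 < l -> forall d, 0 < d ->
  exists h, 0 < h < d /\ f x0 < f (x0 + h).
Proof.
  intros H Hl d Hd. destruct (H l Hl) as [del Hdel].
  set (h := Rmin d del / 2). assert (Hm1 := Rmin_l d del). assert (Hm2 := Rmin_r d del).
  assert (0 < Rmin d del) by (apply Rmin_pos; [lra| apply (cond_pos del)]).
  assert (Hh : 0 < h) by (unfold h; lra).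
  specialize (Hdel h ltac:(lra) ltac:(rewrite Rabs_right; unfold h; lra)).
  exists h. split. unfold h; lra.
  apply Rabs_def2 in Hdel. destruct Hdel as [_ Hq].
  set (q := (f (x0 + h) - f x0) / h) in *.
  assert (f (x0 + h) - f x0 = q * h) by (unfold q; field; lra).
  assert (0 < q * h) by (apply Rmult_lt_0_compat; lra). lra.
Qed.

Lemma dneg f x0 l : derivable_pt_lim f x0 l -> l < 0 -> forall d, 0 < d ->
  exists h, 0 < h < d /\ f x0 < f (x0 - h).
Proof.
  intros H Hl d Hd. destruct (H (-l) ltac:(lra)) as [del Hdel].
  set (h := Rmin d del / 2). assert (Hm1 := Rmin_l d del). assert (Hm2 := Rmin_r d del).
  assert (0 < Rmin d del) by (apply Rmin_pos; [lra| apply (cond_pos del)]).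
  assert (Hh : 0 < h) by (unfold h; lra).
  specialize (Hdel (-h) ltac:(lra) ltac:(rewrite Rabs_left; unfold h; lra)).
  exists h. split. unfold h; lra.
  apply Rabs_def2 in Hdel. destruct Hdel as [Hq _].
  replace (x0 + - h) with (x0 - h) in Hq by ring.
  set (q := (f (x0 - h) - f x0) / - h) in *.
  assert (f (x0 - h) - f x0 = q * (- h)) by (unfold q; field; lra).
  assert (0 < (- q) * h) by (apply Rmult_lt_0_compat; lra). lra.
Qed.

Lemma feas N a k x : inK N a -> (1 <= k <= N)%nat -> 0 <= x -> psum a N - a k + x <= 1 -> inK N (upd a k x).
Proof.
  intros [H1 H2] Hk Hx Hs. split.
  - intros j Hj. destruct (Nat.eq_dec j k). subst; rewrite upd_eq; auto. rewrite upd_neq; auto.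
  - rewrite psum_upd by lia. rewrite (proj2 (Nat.leb_le k N)) by lia. rewrite psum_upd_a by lia. lra.
Qed.

Definition LL N y0 r rho t a k := psum (Dm y0 r rho t a k (a k)) N.

Lemma M1 N y0 r rho t a k : is_global_max N (Gt N y0 r rho t) a -> (1 <= k <= N)%nat -> 0 < a k ->
  0 <= LL N y0 r rho t a k.
Proof.
  intros [HK Hmax] Hk Ha. destruct (Rlt_or_le (LL N y0 r rho t a k) 0) as [Hl|Hl]; auto.
  destruct (dneg _ _ _ (deriv_G N y0 r rho t a k (a k) ltac:(lia)) Hl (a k) Ha) as [h [Hh Hf]].
  cbv beta in Hf. rewrite upd_same in Hf.
  assert (inK N (upd a k (a k - h))) by (apply feas; auto; destruct HK; lra).
  specialize (Hmax _ H). lra.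
Qed.

Lemma M2 N y0 r rho t a k : is_global_max N (Gt N y0 r rho t) a -> (1 <= k <= N)%nat -> psum a N < 1 ->
  LL N y0 r rho t a k <= 0.
Proof.
  intros [HK Hmax] Hk Hs. destruct (Rlt_or_le 0 (LL N y0 r rho t a k)) as [Hl|Hl]; auto.
  destruct (dpos _ _ _ (deriv_G N y0 r rho t a k (a k) ltac:(lia)) Hl (1 - psum a N) ltac:(lra)) as [h [Hh Hf]].
  cbv beta in Hf. rewrite upd_same in Hf.
  assert (0 <= a k) by (apply (proj1 HK); auto).
  assert (inK N (upd a k (a k + h))) by (apply feas; auto; destruct HK; lra).
  specialize (Hmax _ H0). lra.
Qed.

Lemma psum_zero n : psum (fun _ => 0) n = 0.
Proof. induction n; simpl; auto; lra. Qed.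

Lemma psum_minus a b n : psum (fun i => a i - b i) n = psum a n - psum b n.
Proof. induction n; simpl; lra. Qed.

Lemma lastpos a n : (forall j, (1 <= j <= n)%nat -> 0 <= a j) -> 0 < psum a n ->
  exists m, (1 <= m <= n)%nat /\ 0 < a m /\ forall j, (m < j <= n)%nat -> a j = 0.
Proof.
  induction n; simpl; intros H Hp. lra.
  assert (0 <= a (S n)) by (apply H; lia).
  destruct (Rle_lt_or_eq_dec 0 (a (S n)) H0) as [Hlt|Heq].
  - exists (S n). split. lia. split. auto. intros; lia.
  - destruct IHn as [m [Hm1 [Hm2 Hm3]]]. intros; apply H; lia. lra.
    exists m. split. lia. split. auto. intros j Hj. destruct (Nat.eq_dec j (S n)). subst; auto. apply Hm3; lia.
Qed.

Lemma step1 N y0 r rho t a : (0 < y0) -> is_global_max N (Gt N y0 r rho t) a -> psum a N < 1.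
Proof.
  intros Hy Hg. pose proof Hg as [[Hnn Hs] _].
  destruct (Rle_lt_or_eq_dec _ _ Hs) as [|Heq]; auto. exfalso.
  destruct (lastpos a N Hnn ltac:(lra)) as [m [Hm [Ham Htail]]].
  assert (Hsm : psum a m = 1).
  { rewrite <- Heq. replace (psum a N) with (psum a (m + (N - m))) by (f_equal; lia). rewrite psum_split.
    unfold rsum. rewrite (psum_ext (fun i => a (m + i)%nat) (fun _ => 0)). rewrite psum_zero. lra. intros; apply Htail; lia. }
  assert (HL := M1 N y0 r rho t a m Hg Hm Ham).
  unfold LL in HL. rewrite (psum_point _ N m Hm) in HL.
  2:{ intros j Hj Hjm. unfold Dm. destruct (Nat.ltb_spec j m). auto.
      rewrite (proj2 (Nat.eqb_neq j m)) by auto. rewrite (Htail j) by lia. ring. }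
  unfold Dm in HL. rewrite Nat.ltb_irrefl, Nat.eqb_refl in HL.
  destruct m as [|m]; [lia|]. replace (S m - 1)%nat with m in HL by lia.
  simpl in Hsm.
  assert (0 < pprod (fun i => 1 - a i) m).
  { apply pprod_pos. intros i Hi. assert (a i <= psum a m) by (apply elem_le_psum; auto; intros; apply Hnn; lia). lra. }
  assert (0 < y0 * exp (t (S m) * (r - rho)) * pprod (fun i => 1 - a i) m).
  { apply Rmult_lt_0_compat; auto. apply Rmult_lt_0_compat; auto. apply exp_pos. }
  replace (1 - psum a m - 2 * a (S m)) with (- a (S m)) in HL by lra.
  assert (0 < y0 * exp (t (S m) * (r - rho)) * pprod (fun i => 1 - a i) m * a (S m)) by (apply Rmult_lt_0_compat; auto).
  lra.
Qed.


Lemma t_mono (t : nat -> R) N : (forall i, (1 <= i)%nat -> (i < N)%nat -> t i < t (S i)) ->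
  forall i j, (1 <= i)%nat -> (i <= j)%nat -> (j <= N)%nat -> t i <= t j.
Proof.
  intros H i j Hi Hij. induction Hij; intros HN. lra.
  assert (t m < t (S m)) by (apply H; lia). assert (t i <= t m) by (apply IHHij; lia). lra.
Qed.

Lemma exp_mono u v : u <= v -> exp u <= exp v.
Proof. intros H. destruct (Rle_lt_or_eq_dec _ _ H). left; apply exp_increasing; auto. subst; lra. Qed.

Lemma step2 N y0 r rho t a : (1 <= N)%nat -> 0 < y0 -> is_global_max N (Gt N y0 r rho t) a -> psum a N < 1 -> 0 < a N.
Proof.
  intros HN Hy Hg Hs. pose proof Hg as [[Hnn _] _].
  assert (0 <= a N) by (apply Hnn; lia).
  destruct (Rle_lt_or_eq_dec _ _ H) as [|Heq]; auto. exfalso.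
  assert (HL := M2 N y0 r rho t a N Hg ltac:(lia) Hs).
  unfold LL in HL. rewrite (psum_point _ N N ltac:(lia)) in HL.
  2:{ intros j Hj Hjm. unfold Dm. rewrite (proj2 (Nat.ltb_lt j N)) by lia. auto. }
  unfold Dm in HL. rewrite Nat.ltb_irrefl, Nat.eqb_refl in HL.
  destruct N as [|M]; [lia|]. replace (S M - 1)%nat with M in HL by lia.
  simpl in Hs. rewrite <- Heq in HL, Hs.
  assert (0 < pprod (fun i => 1 - a i) M).
  { apply pprod_pos. intros i Hi. assert (a i <= psum a M) by (apply elem_le_psum; auto; intros; apply Hnn; lia). lra. }
  assert (0 < y0 * exp (t (S M) * (r - rho)) * pprod (fun i => 1 - a i) M).
  { apply Rmult_lt_0_compat; auto. apply Rmult_lt_0_compat; auto. apply exp_pos. }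
  assert (0 < y0 * exp (t (S M) * (r - rho)) * pprod (fun i => 1 - a i) M * (1 - psum a M - 2 * 0)) by (apply Rmult_lt_0_compat; lra).
  lra.
Qed.

Definition W a n := pprod (fun i => 1 - a i) n * (1 - psum a n).

Lemma step3dec N y0 r rho t a k : 0 < y0 -> r <= rho ->
  (forall i, (1 <= i)%nat -> (i < N)%nat -> t i < t (S i)) ->
  is_global_max N (Gt N y0 r rho t) a -> psum a N < 1 -> (1 <= k <= N)%nat -> a k = 0 -> False.
Proof.
  intros Hy Hr Ht Hg Hs Hk Hak. pose proof Hg as [[Hnn _] _].
  assert (HL := M2 N y0 r rho t a k Hg Hk Hs). unfold LL in HL. rewrite Hak in HL.
  assert (Hua : upd a k 0 = a) by (rewrite <- Hak; apply upd_same).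
  set (Ek := exp (t k * (r - rho))).
  set (h := fun m => if Nat.ltb m k then 0 else if Nat.eqb m k then y0 * Ek * W a k
                     else - (y0 * Ek * (W a (m-1) - W a m))).
  assert (Hle : psum h N <= psum (Dm y0 r rho t a k 0) N).
  { apply psum_le. intros m Hm. unfold h, Dm. destruct (Nat.ltb_spec m k). lra.
    destruct (Nat.eqb_spec m k).
    - subst m. unfold W, Ek. destruct k as [|k]; [lia|]. replace (S k - 1)%nat with k by lia. simpl.
      rewrite Hak. lra.
    - rewrite Hua. destruct m as [|m]; [lia|]. replace (S m - 1)%nat with m by lia. unfold W. simpl.
      assert (0 <= a (S m)) by (apply Hnn; lia).
      assert (0 <= pprod (fun i => 1 - a i) m).
      { apply pprod_nonneg. intros i Hi. assert (a i <= psum a N) by (apply elem_le_psum; auto; lia). lra. }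
      assert (H2 : psum a m + a (S m) <= psum a N) by (change (psum a (S m) <= psum a N); apply psum_mono; auto; lia).
      assert (Ek >= exp (t (S m) * (r - rho))).
      { apply Rle_ge. apply exp_mono. assert (t k <= t (S m)) by (apply (t_mono t N Ht); lia). nra. }
      assert (0 <= y0 * a (S m) * pprod (fun i => 1 - a i) m * (2 - (psum a m + a (S m)))).
      { apply Rmult_le_pos. apply Rmult_le_pos. apply Rmult_le_pos. lra. auto. auto. lra. }
      assert (0 <= y0 * a (S m) * pprod (fun i => 1 - a i) m * (2 - (psum a m + a (S m))) * (Ek - exp (t (S m) * (r - rho)))) by (apply Rmult_le_pos; lra).
      match goal with |- ?L <= ?R => assert (R - L = y0 * a (S m) * pprod (fun i => 1 - a i) m * (2 - (psum a m + a (S m))) * (Ek - exp (t (S m) * (r - rho)))) by ring end.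
      lra. }
  assert (Hh : forall n, psum h n = if Nat.ltb n k then 0 else y0 * Ek * W a n).
  { induction n. simpl. rewrite (proj2 (Nat.ltb_lt 0 k)) by lia. auto.
    simpl. rewrite IHn. unfold h. destruct (Nat.ltb_spec (S n) k).
    - rewrite (proj2 (Nat.ltb_lt n k)) by lia. lra.
    - destruct (Nat.eqb_spec (S n) k).
      + rewrite (proj2 (Nat.ltb_lt n k)) by lia. subst k. lra.
      + rewrite (proj2 (Nat.ltb_ge n k)) by lia. replace (S n - 1)%nat with n by lia. lra. }
  rewrite Hh in Hle. rewrite (proj2 (Nat.ltb_ge N k)) in Hle by lia.
  assert (0 < W a N).
  { unfold W. apply Rmult_lt_0_compat; [|lra]. apply pprod_pos. intros i Hi.
    assert (a i <= psum a N) by (apply elem_le_psum; auto). lra. }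
  assert (0 < y0 * Ek * W a N). { apply Rmult_lt_0_compat; auto. apply Rmult_lt_0_compat; auto. apply exp_pos. }
  lra.
Qed.


Lemma step3inc N y0 r rho t a j : 0 < y0 -> rho <= r ->
  (forall i, (1 <= i)%nat -> (i < N)%nat -> t i < t (S i)) ->
  is_global_max N (Gt N y0 r rho t) a -> psum a N < 1 -> (S (S j) <= N)%nat ->
  0 < a (S j) -> a (S (S j)) = 0 -> False.
Proof.
  intros Hy Hr Ht Hg Hs Hk Hp Hak. pose proof Hg as [[Hnn _] _].
  assert (HL1a := M1 N y0 r rho t a (S j) Hg ltac:(lia) Hp).
  assert (HL1b := M2 N y0 r rho t a (S j) Hg ltac:(lia) Hs).
  assert (HL2 := M2 N y0 r rho t a (S (S j)) Hg ltac:(lia) Hs).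
  unfold LL in *. set (p := a (S j)) in *.
  assert (Hua : upd a (S (S j)) 0 = a) by (rewrite <- Hak; apply upd_same).
  assert (HSN : forall i, (1 <= i <= N)%nat -> a i <= psum a N) by (intros; apply elem_le_psum; auto).
  set (g := fun m => Dm y0 r rho t a (S (S j)) (a (S (S j))) m - Dm y0 r rho t a (S j) p m).
  assert (Hge := psum_ge_two g N (S j) (S (S j)) ltac:(lia) ltac:(lia) Hk).
  assert (Hg2 : psum g N = psum (Dm y0 r rho t a (S (S j)) (a (S (S j)))) N - psum (Dm y0 r rho t a (S j) p) N) by (unfold g; apply psum_minus).
  assert (Hsum : 0 < g (S j) + g (S (S j))).
  { unfold g, Dm. rewrite (proj2 (Nat.ltb_lt (S j) (S (S j)))) by lia. rewrite Nat.ltb_irrefl, Nat.eqb_refl.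
    rewrite (proj2 (Nat.ltb_ge (S (S j)) (S j))) by lia. rewrite (proj2 (Nat.eqb_neq (S (S j)) (S j))) by lia.
    rewrite Nat.ltb_irrefl, Nat.eqb_refl. rewrite Hak.
    replace (S j - 1)%nat with j by lia. replace (S (S j) - 1)%nat with (S j) by lia. simpl. fold p.
    assert (HA : psum a j + p < 1) by (assert (psum a (S j) <= psum a N) by (apply psum_mono; auto; lia); simpl in H; fold p in H; lra).
    assert (0 <= psum a j) by (apply psum_nonneg; intros; apply Hnn; lia).
    assert (HP : 0 < pprod (fun i => 1 - a i) j).
    { apply pprod_pos. intros i Hi. assert (a i <= psum a N) by (apply HSN; lia). lra. }
    assert (HE : exp (t (S j) * (r - rho)) <= exp (t (S (S j)) * (r - rho))).
    { apply exp_mono. assert (t (S j) < t (S (S j))) by (apply Ht; lia). nra. }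
    set (E1 := exp (t (S j) * (r - rho))) in *. set (E2 := exp (t (S (S j)) * (r - rho))) in *.
    assert (0 < E1) by apply exp_pos.
    set (A := 1 - psum a j - p).
    assert (0 <= (E2 - E1) * (1 - p) * A) by (apply Rmult_le_pos; [apply Rmult_le_pos|]; unfold A; lra).
    assert (0 < E1 * p * (1 - A)) by (apply Rmult_lt_0_compat; [apply Rmult_lt_0_compat|]; unfold A; lra).
    assert (0 < y0 * pprod (fun i => 1 - a i) j * ((E2 - E1) * (1 - p) * A + E1 * p * (1 - A))) by
      (apply Rmult_lt_0_compat; [apply Rmult_lt_0_compat|]; lra).
    match goal with |- 0 < ?X => replace X with (y0 * pprod (fun i => 1 - a i) j * ((E2 - E1) * (1 - p) * A + E1 * p * (1 - A))) by (unfold A; ring) end.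
    auto. }
  assert (0 < psum (Dm y0 r rho t a (S (S j)) (a (S (S j)))) N - psum (Dm y0 r rho t a (S j) p) N).
  { rewrite <- Hg2. eapply Rlt_le_trans; [exact Hsum|]. apply Hge.
    intros m Hm H1 H2. unfold g, Dm.
    destruct (Nat.ltb_spec m (S j)).
    - rewrite (proj2 (Nat.ltb_lt m (S (S j)))) by lia. lra.
    - rewrite (proj2 (Nat.ltb_ge m (S (S j)))) by lia. rewrite (proj2 (Nat.eqb_neq m (S (S j)))) by lia.
      rewrite (proj2 (Nat.eqb_neq m (S j))) by lia. rewrite Hua, Hak.
      rewrite (psum_upd_a a (S j) m) by lia. fold p.
      assert (HQ := pprod_upd_a a (S j) (m - 1) ltac:(lia)). fold p in HQ. rewrite <- HQ.
      set (Q := pprod (fun i => 1 - upd a (S j) 0 i) (m - 1)).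
      assert (0 <= Q).
      { apply pprod_nonneg. intros i Hi. destruct (Nat.eq_dec i (S j)). subst; rewrite upd_eq; lra.
        rewrite upd_neq by auto. assert (a i <= psum a N) by (apply HSN; lia). lra. }
      assert (0 <= a m) by (apply Hnn; lia).
      assert (psum a m <= psum a N) by (apply psum_mono; auto; lia).
      assert (0 <= y0 * a m * exp (t m * (r - rho)) * (Q * p * (1 - psum a m))).
      { apply Rmult_le_pos. apply Rmult_le_pos. apply Rmult_le_pos. lra. auto. left; apply exp_pos.
        apply Rmult_le_pos. apply Rmult_le_pos. auto. lra. lra. }
      match goal with |- 0 <= ?X => replace X with (y0 * a m * exp (t m * (r - rho)) * (Q * p * (1 - psum a m))) by ring end.
      auto. }
  lra.
Qed.


Lemma classify N a : (1 <= N)%nat -> (forall j, (1 <= j <= N)%nat -> 0 <= a j) ->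
  (forall i, (1 <= i)%nat -> (S i <= N)%nat -> 0 < a i -> 0 < a (S i)) -> 0 < a N ->
  (forall j, (1 <= j <= N)%nat -> 0 < a j) \/
  (exists n, (1 <= n <= N - 1)%nat /\ (forall j, (1 <= j <= n)%nat -> a j = 0) /\ (forall j, (n < j <= N)%nat -> 0 < a j)).
Proof.
  intros HN Hnn Hgood HaN.
  assert (P : forall j, (j <= N)%nat -> (forall i, (1 <= i <= j)%nat -> a i = 0) \/
     exists n, (n < j)%nat /\ (forall i, (1 <= i <= n)%nat -> a i = 0) /\ (forall i, (n < i <= j)%nat -> 0 < a i)).
  { induction j; intros Hj.
    - left; intros; lia.
    - destruct (IHj ltac:(lia)) as [Hl | [n [Hn1 [Hn2 Hn3]]]].
      + assert (0 <= a (S j)) by (apply Hnn; lia). destruct (Rle_lt_or_eq_dec _ _ H).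
        * right. exists j. split. lia. split. auto. intros i Hi. replace i with (S j) by lia. auto.
        * left. intros i Hi. destruct (Nat.eq_dec i (S j)). subst; auto. apply Hl; lia.
      + right. exists n. split. lia. split. auto. intros i Hi. destruct (Nat.eq_dec i (S j)).
        * subst. apply Hgood. lia. lia. apply Hn3; lia.
        * apply Hn3; lia. }
  destruct (P N ltac:(lia)) as [Hl | [n [Hn1 [Hn2 Hn3]]]].
  - rewrite (Hl N) in HaN by lia. lra.
  - destruct n as [|n].
    + left. intros; apply Hn3; lia.
    + right. exists (S n). split. lia. auto.
Qed.

Lemma structure N y0 r rho t a : (1 <= N)%nat -> 0 < y0 ->
  (forall i, (1 <= i)%nat -> (i < N)%nat -> t i < t (S i)) ->
  is_global_max N (Gt N y0 r rho t) a ->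
  (forall j, (1 <= j <= N)%nat -> 0 < a j) \/
  (exists n, (1 <= n <= N - 1)%nat /\ (forall j, (1 <= j <= n)%nat -> a j = 0) /\ (forall j, (n < j <= N)%nat -> 0 < a j)).
Proof.
  intros HN Hy Ht Hg. pose proof Hg as [[Hnn _] _].
  assert (Hs := step1 N y0 r rho t a Hy Hg).
  destruct (Rle_or_lt r rho) as [Hr|Hr].
  - left. intros j Hj. assert (0 <= a j) by (apply Hnn; auto). destruct (Rle_lt_or_eq_dec _ _ H); auto.
    exfalso. apply (step3dec N y0 r rho t a j Hy Hr Ht Hg Hs Hj). auto.
  - apply classify; auto.
    + intros i Hi HiN Hai. assert (0 <= a (S i)) by (apply Hnn; lia). destruct (Rle_lt_or_eq_dec _ _ H); auto.
      exfalso. destruct i as [|j]; [lia|]. apply (step3inc N y0 r rho t a j Hy ltac:(lra) Ht Hg Hs HiN Hai). auto.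
    + apply step2 with y0 r rho t; auto.
Qed.

Lemma partial0 N y0 r rho t a j : is_global_max N (Gt N y0 r rho t) a -> (1 <= j <= N)%nat ->
  0 < a j -> psum a N < 1 -> partial_is (Gt N y0 r rho t) a j 0.
Proof.
  intros Hg Hj Ha Hs. unfold partial_is.
  assert (H1 := M1 N y0 r rho t a j Hg Hj Ha). assert (H2 := M2 N y0 r rho t a j Hg Hj Hs).
  replace 0 with (LL N y0 r rho t a j) by lra. apply deriv_G. lia.
Qed.

Lemma main_struct (N : nat) (y0 r rho : R) (t : nat -> R)
  (hN : (1 <= N)%nat) (hy0 : 0 < y0)
  (ht : forall i, (1 <= i)%nat -> (i < N)%nat -> t i < t (S i)) :
  (forall a, is_global_max N (Gt N y0 r rho t) a ->
     ((inIntK N a /\ ~ (exists n, caseII N n a)) \/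
      (~ inIntK N a /\ exists n, caseII N n a)) /\
     (inIntK N a ->
        forall j, (1 <= j <= N)%nat -> partial_is (Gt N y0 r rho t) a j 0) /\
     (forall n, caseII N n a ->
        (forall j, (1 <= j <= n)%nat -> a j = 0) /\
        (forall j, (n < j <= N)%nat -> a j <> 0) /\
        (forall j, (n < j <= N)%nat -> partial_is (Gt N y0 r rho t) a j 0))).
Proof.
  intros a Hg. assert (Hs := step1 N y0 r rho t a hy0 Hg). split; [|split].
  - destruct (structure N y0 r rho t a hN hy0 ht Hg) as [Hall | [n [Hn1 [Hn2 Hn3]]]].
    + left. split. split; auto. intros [n [Hn [Hz _]]].
      specialize (Hall 1%nat ltac:(lia)). rewrite (Hz 1%nat) in Hall by lia. lra.
    + right. split.
      * intros [Hp _]. specialize (Hp 1%nat ltac:(lia)). rewrite Hn2 in Hp by lia. lra.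
      * exists n. split. auto. split. auto. split. auto.
        replace (psum a N) with (psum a (n + (N - n))) in Hs by (f_equal; lia).
        rewrite psum_split in Hs. rewrite (psum_ext a (fun _ => 0)) in Hs by auto. rewrite psum_zero in Hs. lra.
  - intros [Hp _] j Hj. apply partial0; auto.
  - intros n [Hn1 [Hn2 [Hn3 _]]]. split. auto. split.
    + intros j Hj. specialize (Hn3 j Hj). lra.
    + intros j Hj. apply partial0; auto. lia.
Qed.


Definition ub (N i : nat) : R := if andb (Nat.leb 1 i) (Nat.leb i N) then 1 else 0.
Definition Kset N (b : nat -> R) : Prop := (forall i, 0 <= b i <= ub N i) /\ psum b N <= 1.

Lemma Gt_ext N y0 r rho t a b : (forall i, (1 <= i <= N)%nat -> a i = b i) -> Gt N y0 r rho t a = Gt N y0 r rho t b.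
Proof.
  intros H. unfold Gt. apply psum_ext. intros n Hn. rewrite H by auto.
  rewrite (psum_ext a b n) by (intros; apply H; lia).
  rewrite (pprod_ext (fun i => 1 - a i) (fun i => 1 - b i) (n-1)) by (intros; rewrite H; [auto|lia]). auto.
Qed.

Lemma exists_from_K N y0 r rho t :
  (exists c, Kset N c /\ forall b, Kset N b -> Gt N y0 r rho t b <= Gt N y0 r rho t c) ->
  exists a, is_global_max N (Gt N y0 r rho t) a.
Proof.
  intros [c [[Hc1 Hc2] Hmax]]. exists c. split.
  - split; auto. intros j Hj. apply Hc1.
  - intros b [Hb1 Hb2].
    set (b' := fun i => if andb (Nat.leb 1 i) (Nat.leb i N) then b i else 0).
    assert (Hbb : forall i, (1 <= i <= N)%nat -> b' i = b i).
    { intros i Hi. unfold b'. rewrite (proj2 (Nat.leb_le 1 i)), (proj2 (Nat.leb_le i N)) by lia. auto. }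
    rewrite <- (Gt_ext N y0 r rho t b' b Hbb). apply Hmax. split.
    + intros i. unfold b', ub. destruct (andb (Nat.leb 1 i) (Nat.leb i N)) eqn:E; [|lra].
      apply andb_prop in E. destruct E as [E1 E2]. apply Nat.leb_le in E1, E2.
      split. apply Hb1; lia. assert (b i <= psum b N) by (apply elem_le_psum; auto). lra.
    + rewrite (psum_ext b' b) by auto. auto.
Qed.


Module Ex.
From HB Require Import structures.
From mathcomp Require Import all_boot all_order all_algebra.
From mathcomp Require Import all_classical all_reals all_analysis.
From mathcomp Require Import Rstruct Rstruct_topology.
Import Order.TTheory GRing.Theory Num.Theory.
Import ArrowAsProduct.
Local Open Scope classical_set_scope.

Lemma cont_proj (i : nat) : continuous (fun f : nat -> R => f i).
Proof. exact: (@proj_continuous nat (fun _ => R) i). Qed.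

Lemma cont_plus (f g : (nat -> R) -> R) : continuous f -> continuous g -> continuous (fun x => Rplus (f x) (g x)).
Proof. move=> hf hg x. have H := @continuousD R R^o _ f g x (hf x) (hg x). exact: H. Qed.

Lemma cont_mult (f g : (nat -> R) -> R) : continuous f -> continuous g -> continuous (fun x => Rmult (f x) (g x)).
Proof. move=> hf hg x. have H := @continuousM R _ f g x (hf x) (hg x). exact: H. Qed.

Lemma cont_minus (f g : (nat -> R) -> R) : continuous f -> continuous g -> continuous (fun x => Rminus (f x) (g x)).
Proof. move=> hf hg x. have H := @continuousB R R^o _ f g x (hf x) (hg x). exact: H. Qed.

Lemma cont_cst (c : R) : continuous (fun _ : nat -> R => c).
Proof. exact: cst_continuous. Qed.

Lemma cont_psum (F : nat -> (nat -> R) -> R) : (forall n, continuous (F n)) ->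
  forall m, continuous (fun x => psum (fun n => F n x) m).
Proof. move=> hF; elim=> [|m IH] /=; [exact: cont_cst|exact: cont_plus]. Qed.

Lemma cont_pprod (F : nat -> (nat -> R) -> R) : (forall n, continuous (F n)) ->
  forall m, continuous (fun x => pprod (fun n => F n x) m).
Proof. move=> hF; elim=> [|m IH] /=; [exact: cont_cst|exact: cont_mult]. Qed.

Lemma cont_Gt N y0 r rho t : continuous (Gt N y0 r rho t).
Proof.
  rewrite /Gt. apply: (cont_psum (fun n a => (y0 * a n * (1 - psum a n) * exp (t n * (r - rho)) * pprod (fun i => 1 - a i) (n - 1))%R)).
  move=> n. apply: cont_mult; last first.
    apply: (cont_pprod (fun i a => (1 - a i)%R)) => i. apply: cont_minus; [exact: cont_cst|exact: cont_proj].
  apply: cont_mult; last exact: cont_cst.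
  apply: cont_mult; last first.
    apply: cont_minus; first exact: cont_cst. exact: (cont_psum (fun i a => a i) cont_proj n).
  apply: cont_mult; [exact: cont_cst|exact: cont_proj].
Qed.

Lemma ex_K N y0 r rho t :
  exists c, Kset N c /\ forall b, Kset N b -> Rle (Gt N y0 r rho t b) (Gt N y0 r rho t c).
Proof.
  pose C := [set f : nat -> R | forall i, `[0%R, ub N i] (f i)] `&` ((fun f => psum f N) @^-1` [set x : R | (x <= 1)%R]).
  have cC : compact C.
    apply: compact_closedI.
      exact: (@tychonoff nat (fun _ => R) (fun i => `[0%R, ub N i]) (fun i => @segment_compact R 0%R (ub N i))).
    apply: (@preimage_closed _ R (fun f : nat -> R => psum f N) [set x : R | (x <= 1)%R]); last exact: closed_le.
    move=> x _. exact: (cont_psum (fun i a => a i) cont_proj N).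
  have KC : forall b, Kset N b <-> C b.
    move=> b; split.
      move=> [H1 H2]; split => /=.
        move=> i; rewrite in_itv /=; case: (H1 i) => h1 h2; apply/andP; split; exact/RleP.
      exact/RleP.
    move=> [/= H1 /RleP H2]; split => // i; move: (H1 i); rewrite in_itv /= => /andP [/RleP h1 /RleP h2]; by split.
  have C0 : C !=set0.
    exists (fun _ => 0%R); apply/KC; split.
      move=> i; rewrite /ub; case: (_ && _); split; apply: Rle_refl || apply: Rle_0_1.
    elim: N {C cC KC} => [|m IH] /=; first exact: Rle_0_1.
    by rewrite Rplus_0_r.
  have cf : {within C, continuous (Gt N y0 r rho t)} by apply: continuous_subspaceT; exact: cont_Gt.
  have [c cC' cmax] := @compact_EVT_max _ R (Gt N y0 r rho t) C C0 cC cf.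
  exists c; split; first by apply/KC; rewrite inE in cC'.
  move=> b /KC bC; apply/RleP; apply: cmax; by rewrite inE.
Qed.
End Ex.


Open Scope R_scope.

Theorem proposition4 (N : nat) (y0 r rho : R) (t : nat -> R)
  (hN : (1 <= N)%nat) (hy0 : 0 < y0) (ht1 : 0 <= t 1%nat)
  (ht : forall i, (1 <= i)%nat -> (i < N)%nat -> t i < t (S i)) :
  (exists a, is_global_max N (Gt N y0 r rho t) a) /\
  (forall a, is_global_max N (Gt N y0 r rho t) a ->
     ((inIntK N a /\ ~ (exists n, caseII N n a)) \/
      (~ inIntK N a /\ exists n, caseII N n a)) /\
     (inIntK N a ->
        forall j, (1 <= j <= N)%nat -> partial_is (Gt N y0 r rho t) a j 0) /\
     (forall n, caseII N n a ->
        (forall j, (1 <= j <= n)%nat -> a j = 0) /\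
        (forall j, (n < j <= N)%nat -> a j <> 0) /\
        (forall j, (n < j <= N)%nat -> partial_is (Gt N y0 r rho t) a j 0))).
Proof.
  split.
  - apply exists_from_K. apply Ex.ex_K.
  - apply main_struct; auto.
Qed.
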